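(* Let $\mathcal{H}$ be a finite-dimensional Hilbert space, $\{\rho_\theta;\theta\in\Theta\subset\mathbb{R}^d\}$ a smooth family of density operators, $\theta_0\in\Theta$ with $\rho=\rho_{\theta_0}$ strictly positive, and let $\{D_j^{(S)}\}_{j=1}^r$ be a basis of a $\mathcal{D}_\rho$ invariant extension of the SLD tangent space with $D_i^{(S)}=L_i^{(S)}$ for $1\le i\le d$. Let $\Sigma_{ij}=\operatorname{Tr}\rho D_j^{(S)}D_i^{(S)}$, $R=(\operatorname{Re}\Sigma)^{-1}\Sigma(\operatorname{Re}\Sigma)^{-1}=\begin{pmatrix}R_1&R_2^*\\R_2&R_3\end{pmatrix}$ with $R_1$ of size $d\times d$, $R_2$ of size $(r-d)\times d$, $R_3$ of size $(r-d)\times(r-d)$. For $\beta\in[0,1]$ let $D_i^{(\beta)}=(I+\beta\sqrt{-1}\mathcal{D}_\rho)^{-1}(D_i^{(S)})$ ($1\le i\le r$) and $\tilde J^{(\beta)}_{\theta_0}=[\langle D_i^{(\beta)},D_j^{(\beta)}\rangle^{(\beta)}]_{1\le i,j\le r}$. Then $$(\tilde J^{(\beta)}_{\theta_0})^{-1}=\operatorname{Re}R+\beta\sqrt{-1}\operatorname{Im}R,$$ and $$(J^{(\beta)}_{\theta_0})^{-1}=R_1^{(\beta)}-R_2^{(\beta)*}(R_3^{(\beta)})^{-1}R_2^{(\beta)},$$ where $R_k^{(\beta)}=\operatorname{Re}R_k+\beta\sqrt{-1}\operatorname{Im}R_k$ for $k=1,2,3$.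
   Context: $\partial_i\rho=\frac{\partial}{\partial\theta^i}\rho_\theta|_{\theta=\theta_0}$. SLDs $L_i^{(S)}$: Hermitian with $\partial_i\rho=\frac12(\rho L_i^{(S)}+L_i^{(S)}\rho)$, assumed linearly independent; SLD tangent space $\mathcal{T}=\operatorname{span}_{\mathbb{R}}\{L_i^{(S)}\}$. Commutation operator: $\mathcal{D}_\rho(X)\rho+\rho\mathcal{D}_\rho(X)=\sqrt{-1}(X\rho-\rho X)$; a $\mathcal{D}_\rho$ invariant extension of $\mathcal{T}$ is a real subspace of Hermitian operators containing $\mathcal{T}$ and mapped into itself by $\mathcal{D}_\rho$. Inner product on $\mathcal{B}(\mathcal{H})$: $\langle X,Y\rangle^{(\beta)}=\frac12\operatorname{Tr}X^*\{(1+\beta)\rho Y+(1-\beta)Y\rho\}$. The $\beta$ logarithmic derivatives $L_i^{(\beta)}$ are defined by $\partial_i\rho=\frac{1+\beta}{2}\rho L_i^{(\beta)}+\frac{1-\beta}{2}L_i^{(\beta)}\rho$, and $J^{(\beta)}_{\theta_0}=[\langle L_i^{(\beta)},L_j^{(\beta)}\rangle^{(\beta)}]_{ij}$. Re, Im are entrywise. *)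

(* Defs.v *)
From HB Require Import structures.
From mathcomp Require Import all_boot all_order all_algebra.
From mathcomp Require Import all_classical all_reals all_analysis.
From mathcomp Require Import complex.
Set Implicit Arguments. Unset Strict Implicit. Unset Printing Implicit Defensive.
Import Order.TTheory GRing.Theory Num.Theory.
Import numFieldNormedType.Exports.
Local Open Scope ring_scope.
Local Open Scope classical_set_scope.

Section QDefs.
Variable R : realType.
Local Notation C := (R[i]).

Definition toC (x : R) : C := Complex x 0.
Definition reR (z : C) : R := complex.Re z.
Definition imR (z : C) : R := complex.Im z.

Definition adjmx m n (A : 'M[C]_(m, n)) : 'M[C]_(n, m) :=
  (map_mx (fun z : C => z^*) A)^T.

Definition hermitian n (A : 'M[C]_n) : Prop := adjmx A = A.

Definition posdef n (A : 'M[C]_n) : Prop :=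
  hermitian A /\ forall v : 'cV[C]_n, v != 0 -> 0 < (adjmx v *m A *m v) 0 0.

Definition psd n (A : 'M[C]_n) : Prop :=
  hermitian A /\ forall v : 'cV[C]_n, 0 <= (adjmx v *m A *m v) 0 0.

Definition density n (A : 'M[C]_n) : Prop := psd A /\ \tr A = 1.

Definition ReMx m n (A : 'M[C]_(m, n)) : 'M[C]_(m, n) := map_mx (fun z => 'Re z) A.
Definition ImMx m n (A : 'M[C]_(m, n)) : 'M[C]_(m, n) := map_mx (fun z => 'Im z) A.

Definition iterD d (vs : seq 'rV[R]_d) (f : 'rV[R]_d -> R) : 'rV[R]_d -> R :=
  foldr (fun v g => 'D_v g) f vs.

(* f is C^infinity on the open set Th: every iterated directional
   derivative is (Frechet) differentiable at every point of Th *)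
Definition smooth_on d (Th : set 'rV[R]_d) (f : 'rV[R]_d -> R) : Prop :=
  forall (vs : seq 'rV[R]_d) (x : 'rV[R]_d), Th x -> differentiable (iterD vs f) x.

Definition smooth_family d n (Th : set 'rV[R]_d) (rho : 'rV[R]_d -> 'M[C]_n) : Prop :=
  forall a b : 'I_n, smooth_on Th (fun th => reR (rho th a b))
                  /\ smooth_on Th (fun th => imR (rho th a b)).

Definition ecoord d (i : 'I_d) : 'rV[R]_d := delta_mx 0 i.

Definition pderiv d n (rho : 'rV[R]_d -> 'M[C]_n) (th0 : 'rV[R]_d) (i : 'I_d)
  : 'M[C]_n :=
  \matrix_(a, b) (toC ('D_(ecoord i) (fun th => reR (rho th a b)) th0)
                  + 'i * toC ('D_(ecoord i) (fun th => imR (rho th a b)) th0)).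

Definition real_span r n (D : 'I_r -> 'M[C]_n) : set 'M[C]_n :=
  fun X => exists c : 'I_r -> R, X = \sum_(k < r) toC (c k) *: D k.

Definition real_lin_indep r n (D : 'I_r -> 'M[C]_n) : Prop :=
  forall c : 'I_r -> R, \sum_(k < r) toC (c k) *: D k = 0 -> forall k, c k = 0.

Definition real_subspace n (V : set 'M[C]_n) : Prop :=
  V 0 /\ (forall X Y, V X -> V Y -> V (X + Y))
      /\ (forall (c : R) X, V X -> V (toC c *: X)).

Definition is_commutation_op n (rho : 'M[C]_n) (Dc : 'M[C]_n -> 'M[C]_n) : Prop :=
  forall X, Dc X *m rho + rho *m Dc X = 'i *: (X *m rho - rho *m X).

Definition is_SLD n (rho drho L : 'M[C]_n) : Prop :=
  hermitian L /\ drho = 2^-1 *: (rho *m L + L *m rho).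

Definition Dinv_extension d n (Dc : 'M[C]_n -> 'M[C]_n) (L : 'I_d -> 'M[C]_n)
  (V : set 'M[C]_n) : Prop :=
  [/\ real_subspace V, (forall X, V X -> hermitian X),
      real_span L `<=` V & (forall X, V X -> V (Dc X))].

Definition is_betaLD n (beta : R) (rho drho L : 'M[C]_n) : Prop :=
  drho = ((1 + toC beta) / 2) *: (rho *m L) + ((1 - toC beta) / 2) *: (L *m rho).

Definition ipb n (beta : R) (rho X Y : 'M[C]_n) : C :=
  2^-1 * \tr (adjmx X *m ((1 + toC beta) *: (rho *m Y) + (1 - toC beta) *: (Y *m rho))).

Definition betaM m k (beta : R) (A : 'M[C]_(m, k)) : 'M[C]_(m, k) :=
  ReMx A + (toC beta * 'i) *: ImMx A.

End QDefs.

(* Main.v *)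
Require Import Defs.
From HB Require Import structures.
From mathcomp Require Import all_boot all_order all_algebra.
From mathcomp Require Import all_classical all_reals all_analysis.
From mathcomp Require Import complex.
From mathcomp Require Import ring.
Import Order.TTheory GRing.Theory Num.Theory.
Import numFieldNormedType.Exports.
Local Open Scope ring_scope.

Section H.
Variable R : realType.
Local Notation C := (R[i]).
Local Notation cj := (@Num.conj _).

Lemma adjmxM m n p (A : 'M[C]_(m,n)) (B : 'M[C]_(n,p)) :
  adjmx (A *m B) = adjmx B *m adjmx A.
Proof. by rewrite /adjmx map_mxM trmx_mul. Qed.

Lemma adjmxD m n (A B : 'M[C]_(m,n)) : adjmx (A + B) = adjmx A + adjmx B.
Proof. by apply/matrixP => i j; rewrite !mxE rmorphD. Qed.

Lemma adjmxN m n (A : 'M[C]_(m,n)) : adjmx (- A) = - adjmx A.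
Proof. by apply/matrixP => i j; rewrite !mxE rmorphN. Qed.

Lemma adjmxZ m n (a : C) (A : 'M[C]_(m,n)) : adjmx (a *: A) = cj a *: adjmx A.
Proof. by apply/matrixP => i j; rewrite !mxE rmorphM. Qed.

Lemma adjmxK m n (A : 'M[C]_(m,n)) : adjmx (adjmx A) = A.
Proof. by apply/matrixP => i j; rewrite !mxE conjCK. Qed.

Lemma adjmx1 n : adjmx (1%:M : 'M[C]_n) = 1%:M.
Proof. by apply/matrixP => i j; rewrite !mxE rmorphMn rmorph1 eq_sym. Qed.

Lemma tr_adj n (A : 'M[C]_n) : \tr (adjmx A) = cj (\tr A).
Proof. by rewrite /mxtrace rmorph_sum; apply: eq_bigr => i _; rewrite !mxE. Qed.

Lemma toC_conj (x : R) : cj (toC x) = toC x.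
Proof. exact: conjc_real. Qed.

Lemma toC_real (x : R) : toC x \is Num.real.
Proof. by rewrite CrealE toC_conj. Qed.

Lemma toCD (x y : R) : toC (x + y) = toC x + toC y.
Proof. exact: (rmorphD (real_complex R)). Qed.
Lemma toCM (x y : R) : toC (x * y) = toC x * toC y.
Proof. exact: (rmorphM (real_complex R)). Qed.
Lemma toC1 : toC (1:R) = 1. Proof. by []. Qed.
Lemma toC0 : toC (0:R) = 0. Proof. by []. Qed.

Lemma toC_ge0 (x : R) : (0 <= toC x) = (0 <= x).
Proof. by rewrite /toC lecE /= eqxx. Qed.

Lemma conj_half : cj (2^-1 : C) = 2^-1.
Proof. by rewrite fmorphV rmorph_nat. Qed.

Lemma ipb_conj n (beta : R) (rho X Y : 'M[C]_n) : Defs.hermitian rho ->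
  Num.conj (ipb beta rho X Y) = ipb beta rho Y X.
Proof.
move=> hr; rewrite /ipb rmorphM.
rewrite fmorphV rmorph_nat.
Fail rewrite -tr_adj.
rewrite -[X in _ * X]tr_adj.
rewrite !(adjmxM, adjmxD, adjmxZ) adjmxK hr.
rewrite rmorphD rmorphB rmorph1 /= toC_conj.
rewrite mulmxDl mulmxDr -!scalemxAl -!scalemxAr !mxtraceD !mxtraceZ.
by rewrite !mulmxA -(mxtrace_mulC rho) mulmxA.
Qed.


Lemma ii : 'i * 'i = -1 :> C.
Proof. by rewrite -expr2 sqrCi. Qed.

Lemma key_id n (b : R) (rho : 'M[C]_n) Dc Y : is_commutation_op rho Dc ->
  (1 + toC b) *: (rho *m Y) + (1 - toC b) *: (Y *m rho) =
  rho *m (Y + (toC b * 'i) *: Dc Y) + (Y + (toC b * 'i) *: Dc Y) *m rho.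
Proof.
move=> hc; have E := hc Y.
rewrite mulmxDr mulmxDl -scalemxAr -scalemxAl.
move: E; move: (rho *m Y) (Y *m rho) (Dc Y *m rho) (rho *m Dc Y) => P Q U V E.
apply/matrixP => a e; move/matrixP: E => /(_ a e); rewrite !mxE => E.
transitivity (P a e + Q a e + toC b * 'i * (U a e + V a e)); last by ring.
rewrite E.
transitivity (P a e + Q a e + toC b * ('i * 'i) * (Q a e - P a e)); last by ring.
rewrite ii; ring.
Qed.

Lemma ipb_S n (b : R) (rho : 'M[C]_n) Dc X Y : is_commutation_op rho Dc ->
  ipb b rho X Y = ipb 0 rho X (Y + (toC b * 'i) *: Dc Y).
Proof.
move=> hc; rewrite /ipb (key_id _ _ _ _ _ hc) /=.
by rewrite !(toC0, addr0, subr0, scale1r).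
Qed.

Lemma ipbD n (b : R) (rho : 'M[C]_n) X Y Z :
  ipb b rho X (Y + Z) = ipb b rho X Y + ipb b rho X Z.
Proof.
have E : (1 + toC b) *: (rho *m (Y + Z)) + (1 - toC b) *: ((Y + Z) *m rho) =
  ((1 + toC b) *: (rho *m Y) + (1 - toC b) *: (Y *m rho)) +
  ((1 + toC b) *: (rho *m Z) + (1 - toC b) *: (Z *m rho)).
  by move: (1 + toC b) (1 - toC b) => p q; rewrite mulmxDr mulmxDl !scalerDr addrACA.
by rewrite /ipb E mulmxDr mxtraceD mulrDr.
Qed.

Lemma ipbZ n (b : R) (rho : 'M[C]_n) X (a : C) Y :
  ipb b rho X (a *: Y) = a * ipb b rho X Y.
Proof.
rewrite /ipb -scalemxAr -scalemxAl !scalerA (mulrC (1 + _)) (mulrC (1 - _)).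
by rewrite -!scalerA -scalerDr -scalemxAr mxtraceZ mulrCA.
Qed.

Lemma ipb0 n (b : R) (rho : 'M[C]_n) X : ipb b rho X 0 = 0.
Proof. by have := ipbZ _ b rho X 0 0; rewrite scale0r mul0r. Qed.

Lemma ipb_sum n k (b : R) (rho : 'M[C]_n) X (a : 'I_k -> C) (Y : 'I_k -> 'M[C]_n) :
  ipb b rho X (\sum_i a i *: Y i) = \sum_i a i * ipb b rho X (Y i).
Proof.
elim/big_rec2: _ => [|i y1 y2 _ <-]; first exact: ipb0.
by rewrite ipbD ipbZ.
Qed.

Lemma ipb_suml n k (b : R) (rho : 'M[C]_n) (a : 'I_k -> C) (X : 'I_k -> 'M[C]_n) Y :
  Defs.hermitian rho ->
  ipb b rho (\sum_i a i *: X i) Y = \sum_i cj (a i) * ipb b rho (X i) Y.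
Proof.
move=> hr; rewrite -ipb_conj // ipb_sum rmorph_sum /=; apply: eq_bigr => i _.
by rewrite rmorphM /= ipb_conj.
Qed.


Lemma trT n (rho Z : 'M[C]_n) :
  \tr (adjmx Z *m (rho *m Z)) = \sum_j (adjmx (col j Z) *m rho *m col j Z) 0 0.
Proof.
rewrite mulmxA /mxtrace; apply: eq_bigr => j _.
rewrite !mxE; apply: eq_bigr => k _; rewrite !mxE; congr (_ * _).
by apply: eq_bigr => l _; rewrite !mxE.
Qed.

Lemma T_pos n (rho Z : 'M[C]_n) : posdef rho ->
  0 <= \tr (adjmx Z *m (rho *m Z)) /\ (\tr (adjmx Z *m (rho *m Z)) = 0 -> Z = 0).
Proof.
move=> [hr hp].
have tge0 j : 0 <= (adjmx (col j Z) *m rho *m col j Z) 0 0.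
  have [->|nz] := eqVneq (col j Z) 0; first by rewrite mulmx0 mxE.
  exact/ltW/hp.
rewrite trT; split; first by apply: sumr_ge0 => j _.
move=> /psumr_eq0P h; apply/matrixP => a j; rewrite mxE.
have [e|nz] := eqVneq (col j Z) 0.
  by move/matrixP: e => /(_ a 0); rewrite !mxE.
by have := hp _ nz; rewrite h // ltxx.
Qed.

Lemma ipb_pos n (b : R) (rho Z : 'M[C]_n) : posdef rho -> 0 <= b <= 1 ->
  ipb b rho Z Z = 0 -> Z = 0.
Proof.
move=> hp /andP[b0 b1].
have [T1 e1] := T_pos _ _ Z hp.
have [T2 _] := T_pos _ _ (adjmx Z) hp.
rewrite /ipb mulmxDr -!scalemxAr !mxtraceD !mxtraceZ.
have E2 : \tr (adjmx Z *m (Z *m rho)) = \tr (adjmx (adjmx Z) *m (rho *m adjmx Z)).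
  by rewrite adjmxK mxtrace_mulC -mulmxA.
rewrite E2.
move/eqP; rewrite mulf_eq0 invr_eq0 pnatr_eq0 /= => /eqP.
have p1 : 0 < 1 + toC b by rewrite -toC1 -toCD ltcR ltr_wpDr.
have p2 : 0 <= 1 - toC b by rewrite -toC1 -(rmorphB (real_complex R)) lecR subr_ge0.
move/eqP; rewrite paddr_eq0; last 2 first.
- by rewrite mulr_ge0 // ltW.
- by rewrite mulr_ge0.
rewrite mulf_eq0 (gt_eqF p1) /= => /andP[/eqP h _].
exact: e1.
Qed.


Lemma sylv_uniq n (rho Z : 'M[C]_n) : posdef rho ->
  Z *m rho + rho *m Z = 0 -> Z = 0.
Proof.
move=> hp hZ; apply: (@ipb_pos _ 0 _ _ hp); first by rewrite lexx ler01.
by rewrite /ipb toC0 addr0 subr0 !scale1r addrC hZ mulmx0 mxtrace0 mulr0.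
Qed.

Section DcS.
Variables (n : nat) (rho : 'M[C]_n) (Dc : 'M[C]_n -> 'M[C]_n).
Hypotheses (hp : posdef rho) (hc : is_commutation_op rho Dc).

Lemma DcU W X : W *m rho + rho *m W = 'i *: (X *m rho - rho *m X) -> W = Dc X.
Proof.
move=> hW; apply/eqP; rewrite -subr_eq0; apply/eqP; apply: (sylv_uniq _ _ _ hp).
by rewrite mulmxBl mulmxBr addrACA -opprD hW hc subrr.
Qed.

Lemma Dc0 : Dc 0 = 0.
Proof. by symmetry; apply: DcU; rewrite mul0mx mulmx0 subrr scaler0 addr0. Qed.

Lemma DcL (a : C) X Y : Dc (a *: X + Y) = a *: Dc X + Dc Y.
Proof.
symmetry; apply: DcU.
have h1 := hc X; have h2 := hc Y.
rewrite !mulmxDl !mulmxDr -!scalemxAl -!scalemxAr.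
move: h1 h2; move: (Dc X *m rho) (rho *m Dc X) (Dc Y *m rho) (rho *m Dc Y)
  (X *m rho) (rho *m X) (Y *m rho) (rho *m Y) => A1 A2 A3 A4 B1 B2 B3 B4 h1 h2.
apply/matrixP => i j; move/matrixP: h1 => /(_ i j); move/matrixP: h2 => /(_ i j).
rewrite !mxE => h2 h1.
transitivity (a * (A1 i j + A2 i j) + (A3 i j + A4 i j)); first by ring.
rewrite h1 h2; ring.
Qed.

Lemma Dc_sum k (a : 'I_k -> C) (X : 'I_k -> 'M[C]_n) :
  Dc (\sum_i a i *: X i) = \sum_i a i *: Dc (X i).
Proof.
elim/big_rec2: _ => [|i y1 y2 _ <-]; first exact: Dc0.
exact: DcL.
Qed.

Lemma DcB X Y : Dc (X - Y) = Dc X - Dc Y.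
Proof. by rewrite addrC -scaleN1r DcL scaleN1r addrC. Qed.

End DcS.


Lemma adjmx0 m k : adjmx (0 : 'M[C]_(m,k)) = 0.
Proof. by apply/matrixP => i j; rewrite !mxE rmorph0. Qed.

Lemma adjmx_sum n k (a : 'I_k -> C) (F : 'I_k -> 'M[C]_n) :
  adjmx (\sum_i a i *: F i) = \sum_i cj (a i) *: adjmx (F i).
Proof.
elim/big_rec2: _ => [|i y1 y2 _ <-]; first exact: adjmx0.
by rewrite adjmxD adjmxZ.
Qed.

Lemma toC_Re (z : C) : toC (complex.Re z) = (z + cj z) / 2.
Proof. exact: ReJ_add. Qed.
Lemma toC_Im (z : C) : toC (complex.Im z) = (cj z - z) / 2 * 'i.
Proof. exact: ImJ_sub. Qed.

Lemma CLI n k (F : 'I_k -> 'M[C]_n) : (forall i, Defs.hermitian (F i)) ->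
  real_lin_indep F -> forall a : 'I_k -> C, \sum_i a i *: F i = 0 -> forall i, a i = 0.
Proof.
move=> hF hli a h.
have h2 : \sum_i cj (a i) *: F i = 0.
  have := congr1 (@adjmx R n n) h; rewrite adjmx_sum adjmx0 => e; rewrite -[RHS]e.
  by apply: eq_bigr => i _; rewrite hF.
have hre : forall i, complex.Re (a i) = 0.
  apply: hli; rewrite (_ : \sum_i _ = 2^-1 *: (\sum_i a i *: F i + \sum_i cj (a i) *: F i)).
    by rewrite h h2 addr0 scaler0.
  rewrite -big_split scaler_sumr; apply: eq_bigr => i _ /=.
  by rewrite -scalerDl scalerA mulrC toC_Re.
have him : forall i, complex.Im (a i) = 0.
  apply: hli; rewrite (_ : \sum_i _ = (2^-1 * 'i) *: (\sum_i cj (a i) *: F i - \sum_i a i *: F i)).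
    by rewrite h h2 subrr scaler0.
  rewrite -sumrB scaler_sumr; apply: eq_bigr => i _ /=.
  by rewrite toC_Im -scalerBl scalerA; congr (_ *: _); ring.
move=> i; move: (hre i) (him i); case: (a i) => x y /= -> -> //.
Qed.

Lemma GL n k (b : R) (rho : 'M[C]_n) (F : 'I_k -> 'M[C]_n) : posdef rho -> 0 <= b <= 1 ->
  (forall a : 'I_k -> C, \sum_i a i *: F i = 0 -> forall i, a i = 0) ->
  \matrix_(i, j) ipb b rho (F i) (F j) \in unitmx.
Proof.
move=> hp hb hli; rewrite unitmxE unitfE; apply/negP => /det0P [v nz hv].
pose Y := \sum_i cj (v 0 i) *: F i.
have hY j : ipb b rho Y (F j) = 0.
  rewrite /Y ipb_suml; last by case: hp.
  move/matrixP: hv => /(_ 0 j); rewrite !mxE => e; rewrite -[RHS]e.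
  by apply: eq_bigr => i _; rewrite conjCK mxE.
have Y0 : Y = 0.
  apply: (ipb_pos _ _ _ _ hp hb).
  by rewrite {2}/Y ipb_sum big1 // => j _; rewrite hY mulr0.
have := hli _ Y0 => hz; case/eqP: nz; apply/matrixP => i j.
rewrite (ord1 i) mxE; have := hz j; move/eqP; rewrite conjC_eq0 => /eqP //.
Qed.

End H.

Section H2.
Variable R : realType.
Local Notation C := (R[i]).
Local Notation cj := (@Num.conj _).

Lemma inv_right n (A B : 'M[C]_n) : A *m B = 1%:M -> invmx A = B.
Proof.
move=> h; have [uA _] := mulmx1_unit h.
by rewrite -(mulKmx uA B) h mulmx1.
Qed.

Lemma block_inv p q (T : 'M[C]_(p + q)) : T \in unitmx -> ulsubmx T \in unitmx ->
  invmx (ulsubmx T) = ulsubmx (invmx T) -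
     ursubmx (invmx T) *m invmx (drsubmx (invmx T)) *m dlsubmx (invmx T).
Proof.
move=> uT u1.
have hTM : block_mx (ulsubmx T) (ursubmx T) (dlsubmx T) (drsubmx T) *m
  block_mx (ulsubmx (invmx T)) (ursubmx (invmx T)) (dlsubmx (invmx T)) (drsubmx (invmx T))
  = block_mx 1%:M 0 0 1%:M by rewrite !submxK mulmxV // (scalar_mx_block p q).
have hMT : block_mx (ulsubmx (invmx T)) (ursubmx (invmx T)) (dlsubmx (invmx T)) (drsubmx (invmx T)) *m
  block_mx (ulsubmx T) (ursubmx T) (dlsubmx T) (drsubmx T)
  = block_mx 1%:M 0 0 1%:M by rewrite !submxK mulVmx // (scalar_mx_block p q).
move: hTM hMT; move: (invmx T) => M.
rewrite !mulmx_block => /eq_block_mx [e1 e2 e3 e4] /eq_block_mx [f1 f2 f3 f4].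
move: u1 e1 e2 e3 e4 f1 f2 f3 f4.
move: (ulsubmx T) (ursubmx T) (dlsubmx T) (drsubmx T) => T1 T2 T3 T4.
move: (ulsubmx M) (ursubmx M) (dlsubmx M) (drsubmx M) => M1 M2 M3 M4.
move=> u1 e1 e2 e3 e4 f1 f2 f3 f4.
have hM3 : M3 = - (M4 *m T3 *m invmx T1).
  rewrite -[LHS](mulmxK u1 M3).
  have -> : M3 *m T1 = - (M4 *m T3) by apply/eqP; rewrite -addr_eq0 f3.
  by rewrite mulNmx.
have u4 : M4 \in unitmx.
  have : M4 *m (T4 - T3 *m invmx T1 *m T2) = 1%:M.
    by rewrite mulmxBr -f4 hM3 mulNmx !mulmxA addrC.
  by case/mulmx1_unit.
apply: inv_right.
have hT1M2 : T1 *m M2 = - (T2 *m M4) by apply/eqP; rewrite -addr_eq0 e2.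
rewrite mulmxBr !mulmxA hT1M2 mulNmx -(mulmxA T2) mulmxV // mulmx1.
by rewrite ?mulNmx ?mulmxN opprK e1.
Qed.


Lemma sig_id n (rho : 'M[C]_n) Dc X Y : is_commutation_op rho Dc -> Defs.hermitian X ->
  \tr (rho *m Y *m X) = ipb 0 rho X Y + 'i * ipb 0 rho X (Dc Y).
Proof.
move=> hc hX; rewrite /ipb toC0 addr0 subr0 !scale1r hX.
rewrite (addrC (rho *m Dc Y)) hc -scalemxAr mxtraceZ mulmxBr mulmxDr raddfB mxtraceD /=.
rewrite mxtrace_mulC.
move: (\tr (X *m (rho *m Y))) (\tr (X *m (Y *m rho))) => t1 t2.
transitivity (2^-1 * (t1 + t2) + 2^-1 * ('i * 'i) * (t2 - t1)); last by ring.
rewrite ii; field.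
done.
Qed.

Lemma S_sym n (rho X Y : 'M[C]_n) : Defs.hermitian X -> Defs.hermitian Y ->
  ipb 0 rho X Y = ipb 0 rho Y X.
Proof.
move=> hX hY; rewrite /ipb toC0 addr0 subr0 !scale1r hX hY !mulmxDr !mxtraceD.
have e1 : \tr (Y *m (X *m rho)) = \tr (X *m (rho *m Y)) by rewrite mxtrace_mulC -mulmxA.
have e2 : \tr (Y *m (rho *m X)) = \tr (X *m (Y *m rho)) by rewrite mulmxA mxtrace_mulC.
by rewrite e1 e2 addrC.
Qed.

Lemma S_adj n (b : R) (rho : 'M[C]_n) Dc X Y : Defs.hermitian rho ->
  is_commutation_op rho Dc ->
  ipb 0 rho (X + (toC b * 'i) *: Dc X) Y = ipb 0 rho X (Y + (toC b * 'i) *: Dc Y).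
Proof.
move=> hr hc.
transitivity (Num.conj (ipb 0 rho Y (X + (toC b * 'i) *: Dc X))); first by rewrite (ipb_conj _ _ _ _ _ _ hr).
apply: (etrans (congr1 Num.conj (esym (ipb_S _ _ b rho Dc Y X hc)))).
rewrite (ipb_conj _ _ _ _ _ _ hr); exact: (ipb_S _ _ b rho Dc X Y hc).
Qed.

Lemma real_toC (z : C) : z \is Num.real -> toC (complex.Re z) = z.
Proof.
move=> hz; rewrite toC_Re (conj_Creal hz).
field.
done.
Qed.

Lemma betaM_rect k l (b : R) (P Q : 'M[R]_(k, l)) :
  betaM b (map_mx (real_complex R) P + 'i *: map_mx (real_complex R) Q) =
  map_mx (real_complex R) P + (toC b * 'i) *: map_mx (real_complex R) Q.
Proof.
apply/matrixP => i j; rewrite !mxE.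
have r1 : (real_complex R (P i j)) \is Num.real by apply: toC_real.
have r2 : (real_complex R (Q i j)) \is Num.real by apply: toC_real.
by rewrite Re_rect // Im_rect.
Qed.

Lemma betaM_ul p q (b : R) (A : 'M[C]_(p + q)) : betaM b (ulsubmx A) = ulsubmx (betaM b A).
Proof. by apply/matrixP => i j; rewrite !mxE. Qed.
Lemma betaM_dl p q (b : R) (A : 'M[C]_(p + q)) : betaM b (dlsubmx A) = dlsubmx (betaM b A).
Proof. by apply/matrixP => i j; rewrite !mxE. Qed.
Lemma betaM_dr p q (b : R) (A : 'M[C]_(p + q)) : betaM b (drsubmx A) = drsubmx (betaM b A).
Proof. by apply/matrixP => i j; rewrite !mxE. Qed.

Lemma ur_herm p q (M : 'M[C]_(p + q)) : adjmx M = M -> ursubmx M = adjmx (dlsubmx M).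
Proof.
move=> h; apply/matrixP => i j; rewrite -{1}h !mxE //.
Qed.

End H2.

Local Open Scope classical_set_scope.

Theorem lemma4 (R : realType) (n d m : nat)
  (Th : set 'rV[R]_d) (rho : 'rV[R]_d -> 'M[R[i]]_n) (th0 : 'rV[R]_d)
  (LS : 'I_d -> 'M[R[i]]_n) (Dc : 'M[R[i]]_n -> 'M[R[i]]_n)
  (DS : 'I_(d + m) -> 'M[R[i]]_n) (beta : R)
  (Db : 'I_(d + m) -> 'M[R[i]]_n) (Lb : 'I_d -> 'M[R[i]]_n) :
  open Th -> Th th0 ->
  (forall th, Th th -> density (rho th)) ->
  smooth_family Th rho ->
  posdef (rho th0) ->
  (forall i, is_SLD (rho th0) (pderiv rho th0 i) (LS i)) ->
  real_lin_indep LS ->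
  is_commutation_op (rho th0) Dc ->
  Dinv_extension Dc LS (real_span DS) ->
  real_lin_indep DS ->
  (forall i : 'I_d, DS (lshift m i) = LS i) ->
  0 <= beta <= 1 ->
  (forall j, Db j + (toC beta * 'i) *: Dc (Db j) = DS j) ->
  (forall i, is_betaLD beta (rho th0) (pderiv rho th0 i) (Lb i)) ->
  let Sigma : 'M[R[i]]_(d + m) := \matrix_(i, j) \tr (rho th0 *m DS j *m DS i) in
  let Rm := invmx (ReMx Sigma) *m Sigma *m invmx (ReMx Sigma) in
  let Jt : 'M[R[i]]_(d + m) := \matrix_(i, j) ipb beta (rho th0) (Db i) (Db j) in
  let J : 'M[R[i]]_d := \matrix_(i, j) ipb beta (rho th0) (Lb i) (Lb j) in
  let R1b := betaM beta (ulsubmx Rm) in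
  let R2b := betaM beta (dlsubmx Rm) in
  let R3b := betaM beta (drsubmx Rm) in
  invmx Jt = betaM beta Rm /\
  invmx J = R1b - adjmx R2b *m invmx R3b *m R2b.
Proof.
move=> _ _ _ _ hp hSLD hLSli hc hinv hDSli hDL hb hDb hLb Sigma Rm Jt J R1b R2b R3b.
have hr : Defs.hermitian (rho th0) by case: hp.
have hb0 : 0 <= (0 : R) <= 1 by apply/andP; split; [exact: lexx | exact: ler01].
have hspan : forall j, real_span DS (DS j).
  move=> j; exists (fun k => if k == j then 1 else 0).
  rewrite (bigD1 j) //= eqxx big1; first by rewrite toC1 scale1r addr0.
  by move=> k /negbTE ->; rewrite toC0 scale0r.
have hDh : forall j, Defs.hermitian (DS j).
  by move=> j; case: hinv => _ hH _ _; apply: hH.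
have [Af hA] : exists Af : 'I_(d + m) -> 'I_(d + m) -> R,
    forall j, Dc (DS j) = \sum_k toC (Af j k) *: DS k.
  have h : forall j, exists c : 'I_(d + m) -> R, Dc (DS j) = \sum_k toC (c k) *: DS k.
    by move=> j; case: hinv => _ _ _ hI; apply: hI.
  by have [f hf] := choice h; exists f.
pose G := \matrix_(i, j) ipb 0 (rho th0) (DS i) (DS j) : 'M[R[i]]_(d + m).
pose A := \matrix_(k, j) toC (Af j k) : 'M[R[i]]_(d + m).
pose c := toC beta * 'i.
have hGA : forall i j, (G *m A) i j = ipb 0 (rho th0) (DS i) (Dc (DS j)).
  move=> i j; rewrite mxE hA ipb_sum; apply: eq_bigr => k _; rewrite !mxE mulrC.
  by [].
have eS : forall i j, Sigma i j = G i j + 'i * (G *m A) i j.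
  move=> i j; rewrite hGA /Sigma /G !mxE.
  exact: (sig_id _ _ _ _ _ _ hc (hDh i)).
have hSig : Sigma = G + 'i *: (G *m A).
  by apply/matrixP => i j; rewrite eS !mxE.
have hGreal : forall i j, G i j \is Num.real.
  move=> i j; rewrite CrealE mxE; apply/eqP.
  rewrite (ipb_conj _ _ _ _ _ _ hr).
  exact: (S_sym _ _ _ _ _ (hDh j) (hDh i)).
pose Gr := map_mx (fun z : R[i] => complex.Re z) G.
pose Ar := \matrix_(k, j) Af j k : 'M[R]_(d + m).
have hGmap : map_mx (real_complex R) Gr = G.
  apply/matrixP => i j; have := hGreal i j; rewrite mxE => h; rewrite !mxE; exact: (real_toC _ _ h).
have hAmap : map_mx (real_complex R) Ar = A.
  by apply/matrixP => i j; rewrite !mxE.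
have hGAmap : G *m A = map_mx (real_complex R) (Gr *m Ar).
  by rewrite map_mxM hGmap hAmap.
have hGAr : forall i j, (G *m A) i j \is Num.real.
  by move=> i j; rewrite hGAmap mxE; apply: toC_real.
have hGu : G \in unitmx.
  exact: (GL _ _ _ _ _ DS hp hb0 (CLI _ _ _ DS hDh hDSli)).
have hRe : ReMx Sigma = G.
  apply/matrixP => i j; rewrite /ReMx mxE eS.
  exact: (Re_rect (hGreal i j) (hGAr i j)).
have hRm : Rm = invmx G + 'i *: (A *m invmx G).
  rewrite /Rm hRe hSig mulmxDr (mulVmx hGu) -scalemxAr mulmxA (mulVmx hGu) mul1mx.
  by rewrite mulmxDl mul1mx -scalemxAl.
have hinvG : invmx G = map_mx (real_complex R) (invmx Gr).
  by rewrite -hGmap map_invmx.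
have hbeta : betaM beta Rm = invmx G + c *: (A *m invmx G).
  rewrite hRm hinvG -hAmap -map_mxM.
  exact: (betaM_rect _ _ _ beta (invmx Gr) (Ar *m invmx Gr)).
have hJe : forall i j, ipb beta (rho th0) (Db i) (Db j) = ipb 0 (rho th0) (Db i) (DS j).
  move=> i j; rewrite -(hDb j); exact: (ipb_S _ _ beta _ Dc (Db i) (Db j) hc).
have hJtE : forall i j, Jt i j = ipb 0 (rho th0) (Db i) (DS j).
  by move=> i' j'; rewrite mxE; exact: hJe.
have hGE : forall i j, G i j = ipb 0 (rho th0) (DS i) (DS j) by move=> i j; rewrite mxE.
have hAE : forall i j, A i j = toC (Af j i) by move=> i j; rewrite mxE.
have hJt : Jt *m (1%:M + c *: A) = G.
  clearbody Jt G A.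
  apply/matrixP => i l; rewrite mulmxDr mulmx1 -scalemxAr.
  rewrite [LHS]mxE [X in _ + X]mxE [X in _ + _ * X]mxE.
  rewrite (hJtE i l) (hGE i l).
  under eq_bigr => j _ do rewrite (hJtE i j) (hAE j l).
  transitivity (ipb 0 (rho th0) (Db i) (DS l + c *: Dc (DS l))).
    rewrite ipbD ipbZ (hA l) ipb_sum; congr (_ + c * _).
    by apply: eq_bigr => j _; rewrite mulrC.
  rewrite -(S_adj _ _ beta _ Dc (Db i) (DS l) hr hc).
  by rewrite (hDb i).
have hX : invmx G + c *: (A *m invmx G) = (1%:M + c *: A) *m invmx G.
  by rewrite mulmxDl mul1mx scalemxAl.
have hJtX : Jt *m (invmx G + c *: (A *m invmx G)) = 1%:M.
  by rewrite hX mulmxA hJt (mulmxV hGu).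
have hinvJt : invmx Jt = betaM beta Rm.
  by rewrite hbeta; apply: inv_right.
have [hJtu _] := mulmx1_unit hJtX.
split; first exact: hinvJt.
clear hJe hJtE hGE hAE hJt hX hJtX eS hGA.
have h2 : (2^-1 : R[i]) != 0 by rewrite invr_eq0 pnatr_eq0.
have hPhiL : forall i, Lb i + c *: Dc (Lb i) = LS i.
  move=> i.
  have e1 : pderiv rho th0 i = 2^-1 *: (rho th0 *m (Lb i + c *: Dc (Lb i)) +
                                        (Lb i + c *: Dc (Lb i)) *m rho th0).
    rewrite -(key_id _ _ beta _ Dc (Lb i) hc) (hLb i) scalerDr !scalerA.
    by rewrite (mulrC 2^-1) (mulrC 2^-1).
  have e2 := (hSLD i).2.
  have e3 : rho th0 *m (Lb i + c *: Dc (Lb i)) + (Lb i + c *: Dc (Lb i)) *m rho th0 =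
            rho th0 *m LS i + LS i *m rho th0.
    by apply: (scalerI h2); rewrite -e1 -e2.
  apply/eqP; rewrite -subr_eq0; apply/eqP; apply: (sylv_uniq _ _ _ _ hp).
  rewrite mulmxBl mulmxBr addrACA -opprD [X in X - _]addrC e3 (addrC (LS i *m _)).
  exact: subrr.
have hPhiD : forall i, Db (lshift m i) + c *: Dc (Db (lshift m i)) = LS i.
  by move=> i; rewrite hDb hDL.
have hLD : forall i, Lb i = Db (lshift m i).
  move=> i; apply/eqP; rewrite -subr_eq0; apply/eqP.
  apply: (ipb_pos _ _ _ _ _ hp hb).
  rewrite (ipb_S _ _ beta _ Dc _ _ hc).
  have -> : (Lb i - Db (lshift m i)) + c *: Dc (Lb i - Db (lshift m i)) = 0.
    rewrite (DcB _ _ _ _ hp hc) scalerBr addrACA -opprD hPhiL hPhiD.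
    exact: subrr.
  exact: ipb0.
have hJtE' : forall i j, Jt i j = ipb beta (rho th0) (Db i) (Db j).
  move=> i j; rewrite mxE; reflexivity.
have hJ : J = ulsubmx Jt.
  clearbody Jt.
  apply/matrixP => i j; rewrite [RHS]mxE [RHS]mxE hJtE' [LHS]mxE !hLD.
  by [].
have hLSh : forall i, Defs.hermitian (LS i) by move=> i; case: (hSLD i).
have hJu : J \in unitmx.
  apply: (GL _ _ _ _ _ Lb hp hb).
  move=> a ha k; apply: (CLI _ _ _ LS hLSh hLSli a _ k).
  transitivity (\sum_i a i *: (Lb i + c *: Dc (Lb i))).
    by apply: eq_bigr => i _; rewrite hPhiL.
  rewrite (eq_bigr (fun i => a i *: Lb i + c *: (a i *: Dc (Lb i)))); last first.
    by move=> i _; rewrite scalerDr !scalerA mulrC.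
  rewrite big_split /= -scaler_sumr -(Dc_sum _ _ _ _ hp hc) ha (Dc0 _ _ _ _ hp hc).
  by rewrite scaler0 addr0.
have hJh : adjmx Jt = Jt.
  apply/matrixP => i j; rewrite !mxE.
  exact: (ipb_conj _ _ _ _ _ _ hr).
have hM : adjmx (invmx Jt) = invmx Jt.
  symmetry; apply: inv_right.
  by rewrite -{1}hJh -adjmxM (mulVmx hJtu) adjmx1.
have hJu' : ulsubmx Jt \in unitmx by rewrite -hJ.
rewrite /R1b /R2b /R3b hJ (block_inv _ _ _ _ hJtu hJu') (ur_herm _ _ _ _ hM) hinvJt.
by rewrite -betaM_ul -betaM_dl -betaM_dr.
Qed.
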